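(* Let $R$ be a Bézout domain and let $A,B,C\in R^{n\times n}$ satisfy $ABA=ACA$. If $AB$ and $CA$ are group invertible, then $(AB)^2(AB)^{D}$ is similar to $(CA)^2(CA)^{D}$.
   Context: A Bézout domain is an integral domain in which every finitely generated ideal is principal. A matrix $M\in R^{n\times n}$ is Drazin invertible if there exists $X\in R^{n\times n}$ with $MX=XM$, $XMX=X$ and $M^{m+1}X=M^m$ for some nonnegative integer $m$; such $X$ is unique and denoted $M^D$. $M$ is group invertible if this holds with $m=1$ (equivalently $MX=XM$, $XMX=X$, $MXM=M$). Two matrices $M,N\in R^{n\times n}$ are similar if $M=S^{-1}NS$ for some invertible $S\in R^{n\times n}$. *)

(* Defs.v *)
From mathcomp Require Import all_boot all_order all_algebra.
Set Implicit Arguments. Unset Strict Implicit. Unset Printing Implicit Defensive.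
Import GRing.Theory.
Local Open Scope ring_scope.

Definition bezout_domain (R : idomainType) : Prop :=
  forall s : seq R, exists d : R, forall x : R,
    (exists c : 'I_(size s) -> R, x = \sum_(i < size s) c i * s`_i)
    <-> (exists r : R, x = r * d).

Definition is_drazin_inverse (R : comNzRingType) (n : nat) (M X : 'M[R]_n) : Prop :=
  [/\ M *m X = X *m M, X *m M *m X = X &
      exists m : nat, M ^+ m.+1 *m X = M ^+ m].

Definition group_invertible (R : comNzRingType) (n : nat) (M : 'M[R]_n) : Prop :=
  exists X : 'M[R]_n,
    [/\ M *m X = X *m M, X *m M *m X = X & M *m X *m M = M].

Definition similar_mx (R : comUnitRingType) (n : nat) (M N : 'M[R]_n) : Prop :=
  exists S : 'M[R]_n, S \in unitmx /\ M = invmx S *m N *m S.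

(* Main.v *)
Require Import Defs.
From mathcomp Require Import all_boot all_order all_algebra ring.
Import GRing.Theory.
Local Open Scope ring_scope.


Section Emb.
Variable R : comNzRingType.
Variable n : nat.
Definition emb2 (x y z w : R) : 'M[R]_(1 + (1 + n)) :=
  block_mx x%:M (row_mx y%:M 0) (col_mx z%:M 0) (block_mx w%:M 0 0 1%:M).

Lemma emb2_mul x y z w x' y' z' w' :
  emb2 x y z w *m emb2 x' y' z' w' =
  emb2 (x * x' + y * z') (x * y' + y * w') (z * x' + w * z') (z * y' + w * w').
Proof.
rewrite /emb2 !mulmx_block.
rewrite ?(mul_row_col, mul_col_row, mul_col_mx, mul_mx_row, mulmx0, mul0mx, mulmx1, mul1mx, addr0, add0r).
rewrite ?(mul_row_col, mul_col_row, mul_col_mx, mul_mx_row, mulmx0, mul0mx, mulmx1, mul1mx, addr0, add0r).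
rewrite -!scalar_mxM ?(add_col_mx, add_row_mx, add_block_mx, addr0, add0r, row_mx0, col_mx0, raddf0).
by rewrite -!raddfD /=.
Qed.

Lemma emb2_1 : emb2 1 0 0 1 = 1%:M.
Proof.
by rewrite /emb2 !raddf0 row_mx0 col_mx0 -!scalar_mx_block.
Qed.

Lemma emb2_col x y z w p q :
  emb2 x y z w *m col_mx p%:M (col_mx q%:M 0) =
  col_mx (x * p + y * q)%:M (col_mx (z * p + w * q)%:M 0) :> 'cV_(1 + (1 + n)).
Proof.
rewrite /emb2 !mul_block_col.
rewrite ?(mul_row_col, mul_col_row, mul_col_mx, mul_mx_row, mulmx0, mul0mx, mulmx1, mul1mx, addr0, add0r, mul_block_col).
rewrite ?(mul_row_col, mul_col_row, mul_col_mx, mul_mx_row, mulmx0, mul0mx, mulmx1, mul1mx, addr0, add0r).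
rewrite -!scalar_mxM ?(add_col_mx, add_row_mx, add_block_mx, addr0, add0r, row_mx0, col_mx0, raddf0).
by rewrite -!raddfD /=.
Qed.
End Emb.

Lemma hermite (R : idomainType) : bezout_domain R -> forall n (v : 'cV[R]_(1 + n)),
  exists V Vi : 'M[R]_(1 + n), Vi *m V = 1%:M /\ exists g, V *m v = col_mx g%:M 0.
Proof.
move=> bez; elim=> [|n IH] v.
  exists 1%:M, 1%:M; split; first by rewrite mulmx1.
  exists (usubmx v 0 0); rewrite mul1mx -mx11_scalar.
  by rewrite -{1}[v]vsubmxK (flatmx0 (dsubmx v)).
have [V' [Vi' [hV' [g' hg']]]] := IH (dsubmx v).
set a := usubmx v 0 0.
have hv : block_mx 1%:M 0 0 V' *m v = col_mx a%:M (col_mx g'%:M 0).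
  by rewrite -{1}[v]vsubmxK mul_block_col !mul0mx mul1mx addr0 add0r hg' -mx11_scalar.
have hB : block_mx 1%:M 0 0 Vi' *m block_mx 1%:M 0 0 V' = 1%:M :> 'M_(1 + n.+1).
  by rewrite mulmx_block !mulmx0 !mul0mx !addr0 !add0r mulmx1 hV' -scalar_mx_block.
have [d hd] := bez [:: a; g'].
have sum2 : forall c : 'I_2 -> R, \sum_(i < 2) c i * [:: a; g']`_i = c ord0 * a + c (lift ord0 ord0) * g'.
  by move=> c; rewrite !big_ord_recl big_ord0 addr0.
have [ra hra] : exists r, a = r * d.
  apply/hd; exists (fun i => if val i == 0%N then 1 else 0).
  by rewrite /= sum2 /= mul1r mul0r addr0.
have [rb hrb] : exists r, g' = r * d.
  apply/hd; exists (fun i => if val i == 0%N then 0 else 1).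
  by rewrite /= sum2 /= mul1r mul0r add0r.
have [c hc] : exists c : 'I_2 -> R, d = \sum_(i < 2) c i * [:: a; g']`_i.
  by apply/hd; exists 1; rewrite mul1r.
rewrite sum2 in hc.
set c0 := c ord0 in hc; set c1 := c (lift ord0 ord0) in hc.
have [d0|dn0] := eqVneq d 0.
  exists (block_mx 1%:M 0 0 V'), (block_mx 1%:M 0 0 Vi'); split => //.
  exists 0; rewrite hv hra hrb d0 !mulr0 !raddf0.
  by rewrite !col_mx0.
have hcr : c0 * ra + c1 * rb = 1.
  apply: (mulIf dn0); rewrite mul1r {2}hc hra hrb; ring.
exists (@emb2 _ n c0 c1 (- rb) ra *m block_mx 1%:M 0 0 V').
exists (block_mx 1%:M 0 0 Vi' *m @emb2 _ n ra (- c1) rb c0).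
split.
  rewrite mulmxA -[X in X *m block_mx _ _ _ V']mulmxA emb2_mul.
  have -> : ra * c0 + - c1 * - rb = 1 by rewrite mulrNN -hcr; ring.
  have -> : ra * c1 + - c1 * ra = 0 by ring.
  have -> : rb * c0 + c0 * - rb = 0 by ring.
  have -> : rb * c1 + c0 * ra = 1 by rewrite -hcr; ring.
  by rewrite emb2_1 mulmx1 hB.
exists d; rewrite -mulmxA hv emb2_col.
have -> : c0 * a + c1 * g' = d by [].
have -> : - rb * a + ra * g' = 0 by rewrite hra hrb; ring.
by rewrite raddf0 col_mx0.
Qed.

Lemma pid_block (R : comNzRingType) n r :
  block_mx (1%:M : 'M[R]_1) 0 0 (pid_mx r : 'M_n) = pid_mx r.+1 :> 'M_(1 + n).
Proof.
apply/matrixP=> i j; rewrite !mxE.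
case: (splitP i) => i' ->; rewrite !mxE; case: (splitP j) => j' ->; rewrite !mxE /=.
all: try by rewrite !ord1.
by rewrite !add1n eqSS ltnS.
Qed.

Lemma idem_diag (R : idomainType) : bezout_domain R -> forall n (E : 'M[R]_n),
  E *m E = E ->
  exists r, (r <= n)%N /\ exists U Ui : 'M[R]_n, Ui *m U = 1%:M /\ Ui *m E *m U = pid_mx r.
Proof.
move=> bez; elim=> [|n IH] E hE.
  exists 0%N; split=> //; exists 1%:M, 1%:M; split; first by rewrite mulmx1.
  by rewrite !flatmx0.
have [E0|En0] := eqVneq E 0.
  exists 0%N; split=>//; exists 1%:M, 1%:M; split; first by rewrite mulmx1.
  by rewrite E0 mulmx0 mul0mx pid_mx_0.
have [j hj] : exists j, col j E != 0.
  case: (pickP (fun j => col j E != 0)) => [j hj|h]; first by exists j.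
  case/eqP: En0; apply/matrixP=> i j; have := h j; move/negbFE/eqP/matrixP/(_ i 0).
  by rewrite !mxE.
set c := col j E.
have hEc : E *m c = c by rewrite /c !colE mulmxA hE.
have [V [Vi [hVi [g hg]]]] := @hermite R bez n (c : 'cV_(1 + n)).
have hVV : V *m Vi = 1%:M := mulmx1C hVi.
set e := col_mx (1%:M : 'M[R]_1) (0 : 'cV_n).
have ge : g *: e = col_mx g%:M 0 by rewrite scale_col_mx scalemx1 scaler0.
have gn0 : g != 0.
  apply: contraNneq hj => g0.
  apply/eqP; change (c = 0); by rewrite -[c]mul1mx -hVi -mulmxA hg g0 raddf0 col_mx0 mulmx0.
set c2 := Vi *m e.
have hc2 : g *: c2 = c by rewrite /c2 scalemxAr ge -hg mulmxA hVi mul1mx.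
have Ec2 : E *m c2 = c2.
  have : g *: (E *m c2 - c2) == 0 by rewrite scalerBr scalemxAr hc2 hEc subrr.
  by rewrite scalemx_eq0 (negbTE gn0) subr_eq0 => /eqP.
set E' := V *m E *m Vi.
have E'e : E' *m e = e.
  by rewrite /E' -!mulmxA -/c2 Ec2 /c2 mulmxA hVV mul1mx.
have E'E' : E' *m E' = E'.
  by rewrite /E' -!mulmxA (mulmxA Vi) hVi mul1mx (mulmxA E) hE.
move: E'e E'E'; rewrite -[E']submxK /e.
set a := ulsubmx E'; set b := ursubmx E'; set cc := dlsubmx E'; set d := drsubmx E'.
rewrite mul_block_col !mulmx0 !addr0 !mulmx1 => /eq_col_mx [ha hcc].
rewrite ha hcc mulmx_block => /eq_block_mx [_ hb _ hd].
rewrite !mul0mx !mul1mx add0r in hb hd.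
have hbd : b *m d = 0 by apply/(addrI b); rewrite addr0.
have [r [hr [W [Wi [hWi hWd]]]]] := IH d hd.
exists r.+1; split; first by [].
exists (Vi *m block_mx 1%:M (-b) 0 1%:M *m block_mx 1%:M 0 0 W).
exists (block_mx 1%:M 0 0 Wi *m block_mx 1%:M b 0 1%:M *m V).
have hT : block_mx 1%:M b 0 1%:M *m block_mx 1%:M (-b) 0 1%:M = 1%:M :> 'M[R]_(1 + n).
  rewrite mulmx_block !mulmx0 !mul0mx !mulmx1 !mul1mx !addr0 !add0r addrC subrr.
  by rewrite -scalar_mx_block.
have hW : block_mx 1%:M 0 0 Wi *m block_mx 1%:M 0 0 W = 1%:M :> 'M[R]_(1 + n).
  by rewrite mulmx_block !mulmx0 !mul0mx !addr0 !add0r mulmx1 hWi -scalar_mx_block.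
split.
  rewrite -!mulmxA (mulmxA V) hVV mul1mx (mulmxA (block_mx _ b _ _)) hT mul1mx.
  exact: hW.
have hE' : V *m E *m Vi = block_mx 1%:M b 0 d.
  by rewrite -/E' -[E']submxK -/a -/b -/cc -/d ha hcc.
rewrite -!mulmxA (mulmxA V) (mulmxA (V *m E)) hE'.
rewrite (mulmxA (block_mx _ b _ _)) mulmx_block !mulmx0 !mul0mx !mulmx1 !mul1mx !addr0 !add0r.
rewrite mulmxA mulmx_block !mulmx0 !mul0mx !mulmx1 !mul1mx !addr0 !add0r hbd addr0.
rewrite (mulmx_block (1%:M : 'M_1) 0 0 Wi) !mulmx0 !mul0mx !mulmx1 !mul1mx !addr0 !add0r.
change n.+1 with (1 + n)%N. rewrite mulmx_block !mulmx0 !mul0mx !mulmx1 !mul1mx !addr0 !add0r mulNmx addNr hWd.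
exact: pid_block.
Qed.


Lemma rank_le (R : idomainType) n (X Y Z : 'M[R]_n) :
  (\rank (map_mx (@tofrac R) (X *m Y *m Z)) <= \rank (map_mx (@tofrac R) Y))%N.
Proof. by rewrite !map_mxM; apply: leq_trans (mxrankM_maxl _ _) (mxrankM_maxr _ _). Qed.

Lemma core_alg (R : idomainType) n r s (M N K F Gm Gn U Ui V Vi : 'M[R]_n) :
  M *m Gm = Gm *m M -> Gm *m M *m Gm = Gm -> M *m Gm *m M = M ->
  N *m Gn = Gn *m N -> Gn *m N *m Gn = Gn -> N *m Gn *m N = N ->
  K *m N = M *m K -> K *m F = M *m M -> F *m K = N *m N ->
  Ui *m U = 1%:M -> Vi *m V = 1%:M -> (r <= n)%N -> (s <= n)%N ->
  Ui *m (M *m Gm) *m U = pid_mx r -> Vi *m (N *m Gn) *m V = pid_mx s ->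
  exists S Si : 'M[R]_n, Si *m S = 1%:M /\ M = Si *m N *m S.
Proof.
move=> hm1 hm2 hm3 hn1 hn2 hn3 hKN hKF hFK hU hV hr hs hPD hQD.
have hU' := mulmx1C hU; have hV' := mulmx1C hV.
set P := M *m Gm in hPD *; set Q := N *m Gn in hQD *.
have hP : P = U *m pid_mx r *m Ui by rewrite -hPD !mulmxA hU' mul1mx -mulmxA hU' mulmx1.
have hQ : Q = V *m pid_mx s *m Vi by rewrite -hQD !mulmxA hV' mul1mx -mulmxA hV' mulmx1.
have MP : M *m P = M by rewrite /P hm1 mulmxA hm3.
have PM : P *m M = M by rewrite /P hm3.
have QN : Q *m N = N by rewrite /Q hn3.
have NQ : N *m Q = N by rewrite /Q hn1 mulmxA hn3.
have PQK0 : P *m K *m Q = K *m Q.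
  rewrite /P /Q mulmxA -(mulmxA _ K N) hKN mulmxA hm3.
  by rewrite -hKN mulmxA.
have PKQ : P *m K = P *m K *m Q.
  rewrite /P /Q hm1 hn1 -[in LHS]mulmxA -hKN -[in LHS]hn3 !mulmxA.
  by rewrite -(mulmxA Gm K N) hKN mulmxA.
have PK : P *m K = K *m Q by rewrite PKQ PQK0.
have GGFKQ : Gn *m Gn *m F *m K = Q.
  rewrite -mulmxA hFK /Q mulmxA -(mulmxA Gn Gn N) -hn1 mulmxA hn2 hn1.
  by [].
have QQ : Q *m Q = Q by rewrite /Q mulmxA hn3.
have PP : P *m P = P by rewrite /P mulmxA hm3.
have QPK : Q = Gn *m Gn *m F *m P *m K.
  by rewrite -{1}QQ -{1}GGFKQ -mulmxA -PK !mulmxA.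
have PKF : P = K *m F *m Gm *m Gm.
  rewrite hKF -PP /P mulmxA -(mulmxA M Gm M) -hm1 !mulmxA. done.
have PQK : P = K *m Q *m (F *m Gm *m Gm).
  by rewrite -{1}PP {2}PKF -PK !mulmxA.
have rP : \rank (map_mx (@tofrac R) P) = r.
  apply/eqP; rewrite eqn_leq; apply/andP; split.
    by rewrite hP; apply: leq_trans (rank_le _ _ _ _ _) _; rewrite map_pid_mx rank_pid_mx.
  by rewrite -{1}(rank_pid_mx {fraction R} hr hr) -(map_pid_mx (@tofrac R)) -hPD rank_le.
have rQ : \rank (map_mx (@tofrac R) Q) = s.
  apply/eqP; rewrite eqn_leq; apply/andP; split.
    by rewrite hQ; apply: leq_trans (rank_le _ _ _ _ _) _; rewrite map_pid_mx rank_pid_mx.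
  by rewrite -{1}(rank_pid_mx {fraction R} hs hs) -(map_pid_mx (@tofrac R)) -hQD rank_le.
have rs : r = s.
  apply/eqP; rewrite eqn_leq -rP -rQ; apply/andP; split.
    by rewrite {1}PQK rank_le.
  by rewrite {1}QPK rank_le.
clear rQ rP; subst s.
have hD : (pid_mx r : 'M[R]_n) *m (pid_mx r : 'M[R]_n) = (pid_mx r : 'M[R]_n) by apply: (@pid_mx_id R n n n r hr).
move: hP hQ hPD hQD hD; set D := pid_mx r; clearbody D => hP hQ hPD hQD hD.
clearbody P Q.
have PU : P *m U = U *m D by rewrite hP -!mulmxA hU mulmx1.
have UiP : Ui *m P = D *m Ui by rewrite hP !mulmxA hU mul1mx.
have ViQ : Vi *m Q = D *m Vi by rewrite hQ !mulmxA hV mul1mx.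
have D1D : D *m (1%:M - D) = 0 by rewrite mulmxBr mulmx1 hD subrr.
have D1D' : (1%:M - D) *m D = 0 by rewrite mulmxBl mul1mx hD subrr.
have D11 : (1%:M - D) *m (1%:M - D) = 1%:M - D by rewrite mulmxBr mulmx1 D1D' subr0.
have VEV : V *m (1%:M - D) *m Vi = 1%:M - Q.
  by rewrite mulmxBr mulmx1 mulmxBl hV' hQ.
move: D1D D1D' D11 VEV; set E := 1%:M - D; clearbody E => D1D D1D' D11 VEV.
set S0 := K *m Q + U *m (E) *m Vi.
set Z := Gn *m Gn *m F *m P + V *m (E) *m Ui.
have MS : M *m S0 = K *m N.
  rewrite /S0 mulmxDr.
  have -> : M *m (U *m (E) *m Vi) = 0.
    rewrite -MP -(mulmxA M P) (mulmxA P) (mulmxA P U) PU -(mulmxA U D) D1D.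
    by rewrite mulmx0 mul0mx mulmx0.
  by rewrite addr0 mulmxA -hKN -mulmxA NQ.
have SN : S0 *m N = K *m N.
  rewrite /S0 mulmxDl.
  have -> : U *m (E) *m Vi *m N = 0.
    by rewrite -QN !mulmxA -(mulmxA _ Vi Q) ViQ mulmxA -(mulmxA _ _ D) D1D' mulmx0 !mul0mx.
  by rewrite addr0 -mulmxA QN.
have ZS : Z *m S0 = 1%:M.
  rewrite /Z /S0 mulmxDl !mulmxDr.
  have -> : Gn *m Gn *m F *m P *m (K *m Q) = Q.
    rewrite -(mulmxA _ P) (mulmxA P K Q) PK -(mulmxA K Q Q) QQ mulmxA GGFKQ.
    exact: QQ.
  have -> : Gn *m Gn *m F *m P *m (U *m E *m Vi) = 0.
    rewrite -(mulmxA _ P) (mulmxA P) (mulmxA P U) PU -(mulmxA U D) D1D.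
    by rewrite mulmx0 mul0mx mulmx0.
  have -> : V *m E *m Ui *m (K *m Q) = 0.
    rewrite -PK mulmxA -(mulmxA _ Ui P) UiP (mulmxA _ D Ui) -(mulmxA V E D) D1D'.
    by rewrite mulmx0 !mul0mx.
  have -> : V *m E *m Ui *m (U *m E *m Vi) = 1%:M - Q.
    by rewrite -VEV !mulmxA -(mulmxA _ Ui U) hU mulmx1 -(mulmxA _ E E) D11.
  by rewrite addr0 add0r addrC subrK.
exists Z, S0; split; first exact: mulmx1C ZS.
by rewrite SN -MS -mulmxA (mulmx1C ZS) mulmx1.
Qed.


Lemma drazin_group (R : comNzRingType) n (M X G : 'M[R]_n) :
  M *m G = G *m M -> G *m M *m G = G -> M *m G *m M = M ->
  is_drazin_inverse M X -> M ^+ 2 *m X = M.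
Proof.
rewrite !mulmxE => h1 _ h3 [_ _ [m hm]].
rewrite mulmxE in hm *.
have hGM : forall j, G * M ^+ j.+2 = M ^+ j.+1.
  by move=> j; rewrite !exprS !mulrA -h1 h3.
case: m hm => [|m].
  by rewrite expr1 expr0 => hm; rewrite expr2 -mulrA hm mulr1.
elim: m => [|m IH] hm; first by rewrite expr1 in hm.
apply: IH; rewrite -hGM -mulrA hm; exact: hGM.
Qed.

Theorem corollary3p6 (R : idomainType) (n : nat) (A B C : 'M[R]_n) :
  bezout_domain R ->
  A *m B *m A = A *m C *m A ->
  group_invertible (A *m B) -> group_invertible (C *m A) ->
  forall X Y : 'M[R]_n,
    is_drazin_inverse (A *m B) X -> is_drazin_inverse (C *m A) Y ->
    similar_mx ((A *m B) ^+ 2 *m X) ((C *m A) ^+ 2 *m Y).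
Proof.
move=> bez hABA [Gm [hm1 hm2 hm3]] [Gn [hn1 hn2 hn3]] X Y hX hY.
rewrite (drazin_group _ _ _ _ _ hm1 hm2 hm3 hX) (drazin_group _ _ _ _ _ hn1 hn2 hn3 hY).
have hPP : (A *m B *m Gm) *m (A *m B *m Gm) = A *m B *m Gm by rewrite mulmxA hm3.
have hQQ : (C *m A *m Gn) *m (C *m A *m Gn) = C *m A *m Gn by rewrite mulmxA hn3.
have [r [hr [U [Ui [hU hPD]]]]] := @idem_diag _ bez _ _ hPP.
have [s [hs [V [Vi [hV hQD]]]]] := @idem_diag _ bez _ _ hQQ.
have hKN : A *m (C *m A) = A *m B *m A by rewrite mulmxA hABA.
have hKF : A *m (C *m A *m B) = A *m B *m (A *m B) by rewrite !mulmxA hABA.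
have hFK : C *m A *m B *m A = C *m A *m (C *m A).
  by rewrite -!mulmxA (mulmxA A B A) hABA !mulmxA.
have [S [Si [hS hM]]] := core_alg _ _ _ _ _ _ _ _ _ _ _ _ _ _ hm1 hm2 hm3 hn1 hn2 hn3 hKN hKF hFK hU hV hr hs hPD hQD.
exists S; have [_ Su] := mulmx1_unit hS; split => //.
have -> : invmx S = Si.
  by rewrite -[invmx S]mulmx1 -(mulmx1C hS) mulmxA (mulVmx Su) mul1mx.
exact: hM.
Qed.
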